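(* Let $(A,\star)$ be a pre-Lie algebra and define $x\circ y=x\star y+2y\star x$ for $x,y\in A$. Then $(A,\circ)$ is an anti-pre-Lie algebra if and only if $(A,\star)$ is a Novikov algebra. Moreover, in this case $(A,\circ)$ is an admissible Novikov algebra.
   Context: All vector spaces are finite-dimensional over a field $\mathbb F$ of characteristic $0$. A pre-Lie algebra is $(A,\star)$ with $(x\star y)\star z-x\star(y\star z)=(y\star x)\star z-y\star(x\star z)$ for all $x,y,z$; a Novikov algebra is a pre-Lie algebra with additionally $(x\star y)\star z=(x\star z)\star y$. For a bilinear operation $\circ$ write $[x,y]=x\circ y-y\circ x$. An anti-pre-Lie algebra is $(A,\circ)$ such that for all $x,y,z$: (i) $x\circ(y\circ z)-y\circ(x\circ z)=[y,x]\circ z$, and (ii) $[x,y]\circ z+[y,z]\circ x+[z,x]\circ y=0$. An admissible Novikov algebra is $(A,\circ)$ satisfying (i) and $2x\circ[y,z]=(x\circ y)\circ z-(x\circ z)\circ y$. *)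

(* Defs.v *)
From HB Require Import structures.
From mathcomp Require Import all_boot all_order all_algebra.
Set Implicit Arguments. Unset Strict Implicit. Unset Printing Implicit Defensive.
Import GRing.Theory.
Local Open Scope ring_scope.

Section Algs.
Variables (F : fieldType) (A : lmodType F).

Definition bilinear_op (m : A -> A -> A) : Prop :=
  (forall a x y z, m (a *: x + y) z = a *: m x z + m y z) /\
  (forall a x y z, m x (a *: y + z) = a *: m x y + m x z).

Definition comm_op (m : A -> A -> A) (x y : A) : A := m x y - m y x.

Definition is_preLie (m : A -> A -> A) : Prop :=
  forall x y z, m (m x y) z - m x (m y z) = m (m y x) z - m y (m x z).

Definition is_Novikov (m : A -> A -> A) : Prop :=
  is_preLie m /\ forall x y z, m (m x y) z = m (m x z) y.

Definition is_antipreLie (m : A -> A -> A) : Prop :=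
  (forall x y z, m x (m y z) - m y (m x z) = m (comm_op m y x) z) /\
  (forall x y z, m (comm_op m x y) z + m (comm_op m y z) x + m (comm_op m z x) y = 0).

Definition is_admissible_Novikov (m : A -> A -> A) : Prop :=
  (forall x y z, m x (m y z) - m y (m x z) = m (comm_op m y x) z) /\
  (forall x y z, 2%:R *: m x (comm_op m y z) = m (m x y) z - m (m x z) y).

End Algs.

(* Main.v *)
Require Import Defs.
From HB Require Import structures.
From mathcomp Require Import all_boot all_order all_algebra.
From mathcomp Require Import ring.
Set Implicit Arguments. Unset Strict Implicit.
Import GRing.Theory.
Local Open Scope ring_scope.

Section Helpers.
Variables (F : fieldType) (A : lmodType F) (s : A -> A -> A).
Hypothesis Hbil : bilinear_op s.

Lemma sDl x y z : s (x + y) z = s x z + s y z.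
Proof. by have := Hbil.1 1 x y z; rewrite !scale1r. Qed.
Lemma sDr x y z : s x (y + z) = s x y + s x z.
Proof. by have := Hbil.2 1 x y z; rewrite !scale1r. Qed.
Lemma s0l z : s 0 z = 0.
Proof. by apply: (@addrI _ (s 0 z)); rewrite addr0 -sDl addr0. Qed.
Lemma s0r z : s z 0 = 0.
Proof. by apply: (@addrI _ (s z 0)); rewrite addr0 -sDr addr0. Qed.
Lemma sZl a x z : s (a *: x) z = a *: s x z.
Proof. by have := Hbil.1 a x 0 z; rewrite !addr0 s0l addr0. Qed.
Lemma sZr a x z : s x (a *: z) = a *: s x z.
Proof. by have := Hbil.2 a x z 0; rewrite !addr0 s0r addr0. Qed.
Lemma sNl x z : s (- x) z = - s x z.
Proof. by rewrite -scaleN1r sZl scaleN1r. Qed.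
Lemma sNr x z : s z (- x) = - s z x.
Proof. by rewrite -scaleN1r sZr scaleN1r. Qed.

Variables (x y z : A).
Definition atoms := [:: s (s x y) z; s (s x z) y; s (s y x) z; s (s y z) x;
  s (s z x) y; s (s z y) x; s x (s y z); s x (s z y); s y (s x z);
  s y (s z x); s z (s x y); s z (s y x)].
Definition phi (p : {poly F}) : A := \sum_(i < 12) p`_i *: nth 0 atoms i.

Lemma phiD p q : phi p + phi q = phi (p + q).
Proof. by rewrite /phi -big_split /=; apply: eq_bigr => i _; rewrite coefD scalerDl. Qed.
Lemma phiN p : - phi p = phi (- p).
Proof. by rewrite /phi -sumrN; apply: eq_bigr => i _; rewrite coefN scaleNr. Qed.
Lemma phiZ c p : c *: phi p = phi (c%:P * p).
Proof. by rewrite /phi scaler_sumr; apply: eq_bigr => i _; rewrite coefCM scalerA. Qed.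
Lemma phi0 : phi 0 = 0.
Proof. by rewrite /phi big1 // => i _; rewrite coef0 scale0r. Qed.
Lemma phiX i : (i < 12)%N -> phi 'X^i = nth 0 atoms i.
Proof.
move=> Hi; rewrite /phi (bigD1 (Ordinal Hi)) //= coefXn eqxx scale1r big1 ?addr0 //.
move=> j Hj; rewrite coefXn; case: eqP => [Ej|]; last by rewrite scale0r.
by move: Hj; rewrite -(inj_eq val_inj) /= Ej eqxx.
Qed.
Lemma phi_eq p q : p = q -> phi p = phi q. Proof. by move->. Qed.

Lemma eX0 : s (s x y) z = phi 'X^0. Proof. by rewrite phiX. Qed.
Lemma eX1 : s (s x z) y = phi 'X^1. Proof. by rewrite phiX. Qed.
Lemma eX2 : s (s y x) z = phi 'X^2. Proof. by rewrite phiX. Qed.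
Lemma eX3 : s (s y z) x = phi 'X^3. Proof. by rewrite phiX. Qed.
Lemma eX4 : s (s z x) y = phi 'X^4. Proof. by rewrite phiX. Qed.
Lemma eX5 : s (s z y) x = phi 'X^5. Proof. by rewrite phiX. Qed.
Lemma eX6 : s x (s y z) = phi 'X^6. Proof. by rewrite phiX. Qed.
Lemma eX7 : s x (s z y) = phi 'X^7. Proof. by rewrite phiX. Qed.
Lemma eX8 : s y (s x z) = phi 'X^8. Proof. by rewrite phiX. Qed.
Lemma eX9 : s y (s z x) = phi 'X^9. Proof. by rewrite phiX. Qed.
Lemma eX10 : s z (s x y) = phi 'X^10. Proof. by rewrite phiX. Qed.
Lemma eX11 : s z (s y x) = phi 'X^11. Proof. by rewrite phiX. Qed.
End Helpers.

Lemma solveU (F : fieldType) (A : lmodType F) (a b c d : A) :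
  a - b = c - d -> b = d + a - c.
Proof. by move=> h; rewrite -(subrK b a) h addrCA addrA subrK (addrC c b) addrK. Qed.

Ltac norm s x y z :=
  rewrite ?(eX0 s x y z) ?(eX1 s x y z) ?(eX2 s x y z) ?(eX3 s x y z)
          ?(eX4 s x y z) ?(eX5 s x y z) ?(eX6 s x y z) ?(eX7 s x y z)
          ?(eX8 s x y z) ?(eX9 s x y z) ?(eX10 s x y z) ?(eX11 s x y z);
  rewrite ?(phiZ, phiN, phiD); rewrite -?(phi0 s x y z);
  apply: phi_eq; ring.

Section Main.
Variables (F : fieldType) (A : lmodType F) (s : A -> A -> A).
Hypothesis Hbil : bilinear_op s.
Hypothesis HpL : is_preLie s.

Lemma preU u v w : s u (s v w) = s v (s u w) + s (s u v) w - s (s v u) w.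
Proof. exact: solveU (HpL u v w). Qed.

Ltac expand := rewrite ?(sDl Hbil, sDr Hbil, sZl Hbil, sZr Hbil, sNl Hbil, sNr Hbil).

Lemma D_eq x y z :
  let c := fun a b => s a b + 2%:R *: s b a in
  c x (c y z) - c y (c x z) - c (comm_op c y x) z = 6%:R *: (s (s z y) x - s (s z x) y).
Proof.
move=> c; rewrite /c /comm_op /=; expand.
rewrite (preU x y z) (preU z x y) (preU z y x).
norm s x y z.
Qed.

End Main.

Theorem proposition3p5 (F : fieldType) (A : vectType F)
  (charF0 : [pchar F] =i pred0)
  (star : A -> A -> A) (Hbil : bilinear_op star) (HpL : is_preLie star) :
  let circ := fun x y : A => star x y + 2%:R *: star y x in
  (is_antipreLie circ <-> is_Novikov star) /\
  (is_Novikov star -> is_admissible_Novikov circ).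
Proof.
have six : (6%:R : F) != 0 by move/pcharf0P: charF0 => ->.
have preU := preU HpL.
Ltac expand H := rewrite ?(sDl H, sDr H, sZl H, sZr H, sNl H, sNr H).
have Di : forall a b c, star (star c b) a = star (star c a) b ->
   (fun x y : A => star x y + 2%:R *: star y x) a
     ((fun x y : A => star x y + 2%:R *: star y x) b c) -
   (fun x y : A => star x y + 2%:R *: star y x) b
     ((fun x y : A => star x y + 2%:R *: star y x) a c) =
   (fun x y : A => star x y + 2%:R *: star y x)
     (comm_op (fun x y : A => star x y + 2%:R *: star y x) b a) c.
  move=> a b c Hr; apply/eqP; rewrite -subr_eq0; apply/eqP.
  transitivity (6%:R *: (star (star c b) a - star (star c a) b)); first exact: D_eq.
  by rewrite Hr subrr scaler0.
move=> circ; subst circ; split; [split|].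
- case=> Hi _; split=> // a b c.
  move: (Hi c b a) => /eqP; rewrite -subr_eq0 => /eqP H0.
  have E : 0 = 6%:R *: (star (star a b) c - star (star a c) b).
    by rewrite -H0; exact: D_eq.
  by move/esym/eqP: E; rewrite scaler_eq0 (negbTE six) /= subr_eq0 => /eqP.
- case=> _ Hrc; split; first by move=> a b c; apply: Di.
  move=> a b c; rewrite /comm_op /=; expand Hbil.
  rewrite (preU a b c) (preU c a b) (preU c b a) (Hrc a c b) (Hrc b c a) (Hrc c b a).
  norm star a b c.
- case=> _ Hrc; split; first by move=> a b c; apply: Di.
  move=> a b c; rewrite /comm_op /=; expand Hbil.
  rewrite (preU a b c) (preU c a b) (preU c b a) (Hrc a c b) (Hrc b c a) (Hrc c b a).
  norm star a b c.
Qed.
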